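(* Let $r,\sigma,s,c,\lambda,a,q,d,\gamma,b>0$ with $a<\lambda$, $b<\gamma$, $1-\lambda r>0$, $1-br>0$, and $\theta=\sqrt{2r/\sigma^2}$. For $w>1$ let $$G(w)=\frac{(1-\lambda r)\big((\ln w-1)w^2+\ln w+1\big)-cr\theta(w^2+1)}{\theta(1-ar)(w-1)^2}+\frac{s}{1-ar}-\frac{q}{1-br}-\frac{w+1}{\theta(w-1)}-\frac{2\big(\theta rd-(1-\gamma r)\ln w\big)w}{\theta(1-br)(w-1)^2}.$$ Assume there exists $\hat w>1$ with $G(\hat w)=0$ and $$0\le(1-br)(\hat w^2-1)+2\big(\theta rd-(1-\gamma r)\ln\hat w\big)\hat w<(1-br)(\hat w-1)^2.$$ Let $\bar x_2=\frac{q}{1-br}+\frac{\hat w+1}{\theta(\hat w-1)}+\frac{2(\theta rd-(1-\gamma r)\ln\hat w)\hat w}{\theta(1-br)(\hat w-1)^2}$, $\bar x_1=\bar x_2-\frac{\ln\hat w}{\theta}$, $$C_{21}=\frac{e^{-\theta\bar x_2}}{2r}\Big[(1-br)\Big(\bar x_2+\frac1\theta\Big)-q\Big],\quad C_{22}=\frac{e^{\theta\bar x_2}}{2r}\Big[(1-br)\Big(\bar x_2-\frac1\theta\Big)-q\Big],$$ $\varphi_2(x)=C_{21}e^{\theta x}+C_{22}e^{-\theta x}+\frac{q-x}{r}$, and $$W_2(x)=\begin{cases}-bx & x\ge\bar x_2\\ \varphi_2(x)&\bar x_1<x<\bar x_2\\ -b\bar x_2+d+\gamma(\bar x_2-x)&x\le\bar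 x_1.\end{cases}$$ Then $$\{x\in\mathbb{R}:W_2(x)>-bx\}=(-\infty,\bar x_2),\qquad\{x\in\mathbb{R}:W_2(x)=-bx\}=[\bar x_2,\infty).$$
   Context: This is the candidate equilibrium payoff of player P2 (the stopper) in the second type of Nash equilibrium of a linear impulse controller–stopper game: state $X_t=x+\sigma W_t+\sum_{\tau_n\le t}\delta_n$, P2 has running payoff $q-x$, gains $d+\gamma|\delta|$ at each impulse of P1, and terminal payoff $-bx$, discounted at rate $r$. *)

(* Defs.v *)
From Stdlib Require Import Reals.
Open Scope R_scope.

Definition theta (r sigma : R) : R := sqrt (2 * r / sigma ^ 2).

Definition G (r sigma s c lam a q d gam b : R) (w : R) : R :=
  let th := theta r sigma in
  ((1 - lam * r) * ((ln w - 1) * w ^ 2 + ln w + 1) - c * r * th * (w ^ 2 + 1))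
    / (th * (1 - a * r) * (w - 1) ^ 2)
  + s / (1 - a * r) - q / (1 - b * r)
  - (w + 1) / (th * (w - 1))
  - 2 * (th * r * d - (1 - gam * r) * ln w) * w / (th * (1 - b * r) * (w - 1) ^ 2).

Definition xbar2 (r sigma q d gam b w : R) : R :=
  let th := theta r sigma in
  q / (1 - b * r) + (w + 1) / (th * (w - 1))
  + 2 * (th * r * d - (1 - gam * r) * ln w) * w / (th * (1 - b * r) * (w - 1) ^ 2).

Definition xbar1 (r sigma q d gam b w : R) : R :=
  xbar2 r sigma q d gam b w - ln w / theta r sigma.

Definition C21 (r sigma q d gam b w : R) : R :=
  let th := theta r sigma in
  let x2 := xbar2 r sigma q d gam b w in
  exp (- th * x2) / (2 * r) * ((1 - b * r) * (x2 + 1 / th) - q).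

Definition C22 (r sigma q d gam b w : R) : R :=
  let th := theta r sigma in
  let x2 := xbar2 r sigma q d gam b w in
  exp (th * x2) / (2 * r) * ((1 - b * r) * (x2 - 1 / th) - q).

Definition phi2 (r sigma q d gam b w : R) (x : R) : R :=
  let th := theta r sigma in
  C21 r sigma q d gam b w * exp (th * x) + C22 r sigma q d gam b w * exp (- th * x)
  + (q - x) / r.

Definition W2 (r sigma q d gam b w : R) (x : R) : R :=
  let x2 := xbar2 r sigma q d gam b w in
  let x1 := xbar1 r sigma q d gam b w in
  if Rle_dec x2 x then - b * x
  else if Rlt_dec x1 x then phi2 r sigma q d gam b w x
  else - b * x2 + d + gam * (x2 - x).

(* Main.v *)
Require Import Defs.
From Stdlib Require Import Reals Lra Psatz.
From Coquelicot Require Import Coquelicot.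
Open Scope R_scope.

Lemma A1 (s : R) : 1 < s -> 1 - / s < ln s.
Proof.
  intro Hs.
  assert (H : ln (/ s) <> 0).
  { rewrite ln_Rinv by lra. intro H0. assert (ln 1 < ln s) by (apply ln_increasing; lra).
    rewrite ln_1 in H. lra. }
  pose proof (exp_ineq1 _ H) as H1. rewrite exp_ln in H1 by (apply Rinv_0_lt_compat; lra).
  rewrite ln_Rinv in H1 by lra. lra.
Qed.

Lemma A2 (s : R) : 1 < s -> 2 * (s - 1) < (s + 1) * ln s.
Proof.
  intro Hs.
  destruct (MVT_cor2 (fun y => (y + 1) * ln y - 2 * (y - 1)) (fun y => ln y + / y - 1) 1 s Hs)
    as [c [Hc1 Hc2]].
  { intros c Hc. apply is_derive_Reals. auto_derive. lra. field. lra. }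
  rewrite ln_1 in Hc1. pose proof (A1 c (proj1 Hc2)).
  assert (0 < (ln c + / c - 1) * (s - 1)) by (apply Rmult_lt_0_compat; lra). lra.
Qed.

Definition mm (s : R) := (s ^ 2 - 1 - 2 * s * ln s) / (s - 1) ^ 2.

Lemma A3 (s w : R) : 1 < s -> s < w -> mm s < mm w.
Proof.
  intros Hs Hw.
  destruct (MVT_cor2 mm (fun y => 2 * ((y + 1) * ln y - 2 * (y - 1)) / (y - 1) ^ 3) s w Hw)
    as [c [Hc1 Hc2]].
  { intros c Hc. apply is_derive_Reals. unfold mm. auto_derive.
    - repeat split; try lra; nra.
    - field. lra. }
  pose proof (A2 c ltac:(lra)).
  assert (0 < 2 * ((c + 1) * ln c - 2 * (c - 1)) / (c - 1) ^ 3).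
  { apply Rdiv_lt_0_compat. lra. apply pow_lt. lra. }
  assert (0 < 2 * ((c + 1) * ln c - 2 * (c - 1)) / (c - 1) ^ 3 * (w - s)) by (apply Rmult_lt_0_compat; lra).
  lra.
Qed.

Theorem lemmaA4 (r sigma s c lam a q d gam b what : R) :
  0 < r -> 0 < sigma -> 0 < s -> 0 < c -> 0 < lam -> 0 < a -> 0 < q ->
  0 < d -> 0 < gam -> 0 < b ->
  a < lam -> b < gam -> 0 < 1 - lam * r -> 0 < 1 - b * r ->
  1 < what ->
  G r sigma s c lam a q d gam b what = 0 ->
  0 <= (1 - b * r) * (what ^ 2 - 1)
       + 2 * (theta r sigma * r * d - (1 - gam * r) * ln what) * what ->
  (1 - b * r) * (what ^ 2 - 1)
       + 2 * (theta r sigma * r * d - (1 - gam * r) * ln what) * what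
    < (1 - b * r) * (what - 1) ^ 2 ->
  (forall x : R,
     W2 r sigma q d gam b what x > - b * x <-> x < xbar2 r sigma q d gam b what) /\
  (forall x : R,
     W2 r sigma q d gam b what x = - b * x <-> xbar2 r sigma q d gam b what <= x).
Proof.
  intros Hr Hsig Hs Hc Hlam Ha Hq Hd Hgam Hb Hal Hbg Hlr Hbr Hw HG H1 H2.
  assert (Hth : 0 < theta r sigma).
  { unfold theta. apply sqrt_lt_R0. apply Rdiv_lt_0_compat. lra. apply pow_lt; lra. }
  assert (HL : 0 < ln what) by (rewrite <- ln_1; apply ln_increasing; lra).
  set (th := theta r sigma) in *.
  set (x2 := xbar2 r sigma q d gam b what).
  assert (Hx12 : xbar1 r sigma q d gam b what = x2 - ln what / th) by reflexivity.
  assert (HLth : 0 < ln what / th) by (apply Rdiv_lt_0_compat; lra).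
  assert (Key : forall x, x2 - ln what / th < x < x2 -> phi2 r sigma q d gam b what x > - b * x).
  { intros x Hx.
    set (t := th * (x2 - x)).
    assert (Ht0 : 0 < t) by (unfold t; apply Rmult_lt_0_compat; lra).
    assert (HtL : t < ln what).
    { unfold t. assert (th * (x2 - x) < th * (ln what / th)) by (apply Rmult_lt_compat_l; lra).
      replace (th * (ln what / th)) with (ln what) in H by (field; lra). exact H. }
    set (S := exp t).
    assert (HS1 : 1 < S) by (unfold S; rewrite <- exp_0; apply exp_increasing; lra).
    assert (HSw : S < what) by (unfold S; rewrite <- (exp_ln what) by lra; apply exp_increasing; lra).
    assert (HlnS : ln S = t) by (unfold S; apply ln_exp).
    assert (Hm := A3 S what HS1 HSw). unfold mm in Hm. rewrite HlnS in Hm.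
    assert (Ex1 : exp (th * x) = exp (th * x2) / S).
    { unfold S, t. replace (th * x2) with (th * x + th * (x2 - x)) by ring.
      rewrite exp_plus. field. apply Rgt_not_eq, exp_pos. }
    assert (Ex2 : exp (- th * x) = exp (- th * x2) * S).
    { unfold S, t. rewrite <- exp_plus. f_equal. ring. }
    assert (Ex3 : exp (- th * x2) * exp (th * x2) = 1).
    { rewrite <- exp_plus. replace (- th * x2 + th * x2) with 0 by ring. apply exp_0. }
    set (M := th * ((1 - b * r) * x2 - q)).
    assert (HM : M * (what - 1) ^ 2 = (1 - b * r) * (what ^ 2 - 1)
       + 2 * (th * r * d - (1 - gam * r) * ln what) * what).
    { unfold M, x2, xbar2. fold th. field. split; lra. }
    assert (HMge : (1 - b * r) * (what ^ 2 - 1 - 2 * what * ln what) < M * (what - 1) ^ 2).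
    { rewrite HM. assert (0 < (gam - b) * r * ln what * what).
      { repeat apply Rmult_lt_0_compat; lra. }
      assert (0 < th * r * d * what) by (repeat apply Rmult_lt_0_compat; lra). nra. }
    assert (Hgoal : (1 - b * r) * (S ^ 2 - 1 - 2 * S * t) < M * (S - 1) ^ 2).
    { assert (HS2 : 0 < (S - 1) ^ 2) by (apply pow_lt; lra).
      assert (Hw2 : 0 < (what - 1) ^ 2) by (apply pow_lt; lra).
      set (mw := (what ^ 2 - 1 - 2 * what * ln what) / (what - 1) ^ 2) in *.
      set (ms := (S ^ 2 - 1 - 2 * S * t) / (S - 1) ^ 2) in *.
      assert (E1 : S ^ 2 - 1 - 2 * S * t = ms * (S - 1) ^ 2) by (unfold ms; field; lra).
      assert (E2 : what ^ 2 - 1 - 2 * what * ln what = mw * (what - 1) ^ 2) by (unfold mw; field; lra).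
      rewrite E2 in HMge. rewrite E1.
      assert (HMm : (1 - b * r) * mw < M).
      { apply (Rmult_lt_reg_r ((what - 1) ^ 2)); lra. }
      assert ((1 - b * r) * ms < (1 - b * r) * mw) by (apply Rmult_lt_compat_l; lra).
      nra. }
    unfold phi2, C21, C22. fold th. fold x2.
    rewrite Ex1, Ex2.
    assert (Hxx : x = x2 - t / th) by (unfold t; field; lra).
    assert (EE : exp (- th * x2) = / exp (th * x2)).
    { rewrite <- exp_Ropp. f_equal. ring. }
    rewrite EE. rewrite Hxx.
    assert (HE : 0 < exp (th * x2)) by apply exp_pos.
    apply Rlt_gt. apply Rminus_lt_0.
    assert (Hpos : 0 < (M * (S - 1) ^ 2 - (1 - b * r) * (S ^ 2 - 1 - 2 * S * t)) / (2 * r * S * th)).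
    { apply Rdiv_lt_0_compat. lra. repeat apply Rmult_lt_0_compat; lra. }
    match goal with |- 0 < ?e => replace e with
      ((M * (S - 1) ^ 2 - (1 - b * r) * (S ^ 2 - 1 - 2 * S * t)) / (2 * r * S * th)) end.
    exact Hpos.
    unfold M. field. repeat split; lra. }
  split; intro x; unfold W2; fold x2; rewrite Hx12;
    (destruct (Rle_dec x2 x) as [Hle|Hnle];
    [ | destruct (Rlt_dec (x2 - ln what / th) x) as [Hlt|Hnlt]]).
  - split; intro; lra.
  - split; intro; [lra|]. apply Key; lra.
  - split; intro; [lra|].
    assert (0 < (gam - b) * (x2 - x)) by (apply Rmult_lt_0_compat; lra). lra.
  - split; intro; lra.
  - split; intro H; [|lra]. exfalso. pose proof (Key x ltac:(lra)). lra.
  - split; intro H; [|lra]. exfalso.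
    assert (0 < (gam - b) * (x2 - x)) by (apply Rmult_lt_0_compat; lra). lra.
Qed.
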